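(* Consider the resilient constrained consensus algorithm described in the context, with $\bigcap_{i\in\mathcal H}\mathcal X_i=\{x^*\}$. For all times $t$, $$\sum_{i\in\mathcal H}\psi_i(t)\le 4|\mathcal H|^3V(t),$$ where $$\psi_i(t)=\Big\|\sum_{j\in\mathcal M_i(t)}(x_{ji}(t)-x_i(t))\Big\|^2\quad\text{and}\quad V(t)=\sum_{i\in\mathcal H}\|x_i(t)-x^*\|^2.$$
   Context: Setting: There are $n$ agents $\mathcal N=\{1,\dots,n\}$ on a complete communication graph. A known integer $f\ge0$ is given. The agents are partitioned into normal agents $\mathcal H$ and Byzantine agents $\mathcal F$ with $|\mathcal F|\le f$. Each $i\in\mathcal H$ has a closed convex $\mathcal X_i\subseteq\mathbb R^m$. Algorithm: normal agent $i$ has state $x_i(t)\in\mathbb R^m$ and at time $t$ receives $x_{ji}(t)$ from each $j\ne i$. If $j\in\mathcal H$, then $x_{ji}(t)=x_j(t)$. If $j\in\mathcal F$, the value is arbitrary and may differ per recipient. Agent $i$ discards the $f$ received vectors with largest $\|x_i(t)-x_{ji}(t)\|$, with ties broken arbitrarily. The remaining $n-f-1$ senders form $\mathcal M_i(t)\subseteq\mathcal N\setminus\{i\}$. The update is $$x_i(t+1)=\mathrm P_{\mathcal X_i}\Big[x_i(t)+\alpha\sum_{j\in\mathcal M_i(t)}(x_{ji}(t)-x_i(t))\Big],$$ with $\alpha>0$ and $\mathrm P_{\mathcal C}$ the Euclidean projection. *)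

(* Defs.v *)
From HB Require Import structures.
From mathcomp Require Import all_boot all_order all_algebra.
From mathcomp Require Import all_classical all_reals all_analysis.
Set Implicit Arguments. Unset Strict Implicit. Unset Printing Implicit Defensive.
Import Order.TTheory GRing.Theory Num.Theory.
Import numFieldNormedType.Exports.
Local Open Scope ring_scope.
Local Open Scope classical_set_scope.

Definition enorm (R : realType) (m : nat) (v : 'rV[R]_m) : R :=
  Num.sqrt (\sum_(k < m) v 0 k ^+ 2).

Definition convex_rV (R : realType) (m : nat) (C : set 'rV[R]_m) : Prop :=
  forall x y, C x -> C y -> forall l : R, 0 <= l <= 1 ->
    C (l *: x + (1 - l) *: y).

Definition is_proj (R : realType) (m : nat) (C : set 'rV[R]_m)
  (y p : 'rV[R]_m) : Prop :=
  C p /\ forall z, C z -> enorm (y - p) <= enorm (y - z).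

(* M is a valid outcome of the trimming step of agent i: from the n-1
   received vectors (msg j, j <> i), the f with largest distance to xi
   are discarded (ties broken arbitrarily); M is the set of the
   remaining n-f-1 senders. *)
Definition trimmed (R : realType) (m n f : nat) (i : 'I_n)
  (xi : 'rV[R]_m) (msg : 'I_n -> 'rV[R]_m) (M : {set 'I_n}) : Prop :=
  [/\ i \notin M, #|M| = (n - f - 1)%N &
      forall j k, j \in M -> k \notin M -> k != i ->
        enorm (xi - msg j) <= enorm (xi - msg k)].

(* Main.v *)
Require Import Defs.
From HB Require Import structures.
From mathcomp Require Import all_boot all_order all_algebra.
From mathcomp Require Import all_classical all_reals all_analysis.
Import Order.TTheory GRing.Theory Num.Theory.
Import numFieldNormedType.Exports.
Local Open Scope ring_scope.
Local Open Scope classical_set_scope.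


From mathcomp Require Import ring lra zify.

Set Implicit Arguments.
Section Helpers.
Variable R : realType.
Lemma cs (I : finType) (A : {set I}) (a : I -> R) :
  (\sum_(j in A) a j) ^+ 2 <= #|A|%:R * \sum_(j in A) a j ^+ 2.
Proof.
have H0 : 0 <= \sum_(j in A) \sum_(l in A) (a j - a l) ^+ 2.
  by apply: sumr_ge0 => j _; apply: sumr_ge0 => l _; apply: sqr_ge0.
have E : \sum_(j in A) \sum_(l in A) (a j - a l) ^+ 2 =
   \sum_(j in A) \sum_(l in A) (a j ^+ 2 + a l ^+ 2) - 2 * (\sum_(j in A) \sum_(l in A) a j * a l).
  rewrite mulr_sumr -sumrB; apply: eq_bigr => j _.
  rewrite mulr_sumr -sumrB; apply: eq_bigr => l _.
  ring.
move: H0; rewrite E.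
have E1 : \sum_(j in A) \sum_(l in A) a j * a l = (\sum_(j in A) a j) ^+ 2.
  by rewrite expr2 mulr_suml; apply: eq_bigr => j _; rewrite mulr_sumr.
have E2 : \sum_(j in A) \sum_(l in A) (a j ^+ 2 + a l ^+ 2) = 2 * (#|A|%:R * \sum_(j in A) a j ^+ 2).
  rewrite (eq_bigr (fun j => a j ^+ 2 *+ #|A| + \sum_(l in A) a l ^+ 2)); last first.
    move=> j _. rewrite big_split. rewrite sumr_const. done.
  rewrite big_split /= sumr_const -sumrMnl !mulr_natl mulr2n.
  by rewrite sumrMnl.
rewrite E1 E2.
lra.
Qed.

Definition sq {m} (v : 'rV[R]_m) := \sum_(k < m) v 0 k ^+ 2.

Lemma sq_ge0 m (v : 'rV[R]_m) : 0 <= sq v.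
Proof. by apply: sumr_ge0 => k _; apply: sqr_ge0. Qed.

Lemma enorm_sq m (v : 'rV[R]_m) : enorm v ^+ 2 = sq v.
Proof. by rewrite /enorm sqr_sqrtr // sq_ge0. Qed.

Lemma le_sq m (a b : 'rV[R]_m) : enorm a <= enorm b -> sq a <= sq b.
Proof.
move=> h; rewrite -!enorm_sq !expr2.
by apply: ler_pM => //; apply: sqrtr_ge0.
Qed.

Lemma sq_sum m (I : finType) (A : {set I}) (v : I -> 'rV[R]_m) :
  sq (\sum_(j in A) v j) <= #|A|%:R * \sum_(j in A) sq (v j).
Proof.
rewrite /sq; under eq_bigr do rewrite summxE.
rewrite exchange_big /= mulr_sumr; apply: ler_sum => k _; exact: cs.
Qed.

Lemma sq_tri m (a b c : 'rV[R]_m) : sq (a - b) <= 2 * sq (a - c) + 2 * sq (b - c).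
Proof.
rewrite /sq !mulr_sumr -big_split /=; apply: ler_sum => k _; rewrite !mxE -subr_ge0.
set p := a 0 k; set q := b 0 k; set r := c 0 k.
have -> : 2 * (p - r) ^+ 2 + 2 * (q - r) ^+ 2 - (p - q) ^+ 2 = (p + q - 2 * r) ^+ 2 by ring.
exact: sqr_ge0.
Qed.

Lemma sq_sym m (a b : 'rV[R]_m) : sq (a - b) = sq (b - a).
Proof. by apply: eq_bigr => k _; rewrite !mxE -opprB sqrrN. Qed.

End Helpers.
Arguments sq {R m}.
Arguments sq_tri {R m}.
Arguments sq_sum {R m I}.

Lemma lemma4_proof (R : realType) (n m f : nat) (H : {set 'I_n})
  (X : 'I_n -> set 'rV[R]_m) (alpha : R) (xstar : 'rV[R]_m)
  (x : nat -> 'I_n -> 'rV[R]_m) (msg : nat -> 'I_n -> 'I_n -> 'rV[R]_m)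
  (M : nat -> 'I_n -> {set 'I_n}) :
  (f < n)%N ->
  (#|~: H| <= f)%N ->
  (forall t i j, i \in H -> j \in H -> j != i -> msg t j i = x t j) ->
  (forall t i, i \in H -> trimmed f i (x t i) (fun j => msg t j i) (M t i)) ->
  forall t,
    \sum_(i in H) enorm (\sum_(j in M t i) (msg t j i - x t i)) ^+ 2
    <= 4 * (#|H| ^ 3)%:R * \sum_(i in H) enorm (x t i - xstar) ^+ 2.
Proof.
move=> fn HB Hmsg Htr t.
set V := \sum_(i in H) enorm (x t i - xstar) ^+ 2.
have HV : V = \sum_(i in H) sq (x t i - xstar).
  by apply: eq_bigr => i _; apply: enorm_sq.
have V0 : 0 <= V by rewrite HV; apply: sumr_ge0 => i _; apply: sq_ge0.
have Hsk : forall k, k \in H -> sq (x t k - xstar) <= V.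
  move=> k kH; rewrite HV (bigD1 k) //= lerDl.
  by apply: sumr_ge0 => i _; apply: sq_ge0.
have Hk : forall i k, i \in H -> k \in H -> sq (x t k - x t i) <= 4 * V.
  move=> i k iH kH; apply: le_trans (sq_tri (x t k) (x t i) xstar) _.
  have := Hsk _ iH; have := Hsk _ kH; lra.
have key : forall i, i \in H -> forall j, j \in M t i ->
    sq (msg t j i - x t i) <= 4 * V.
  move=> i iH j jM; have [ni cM Hle] := Htr t i iH.
  case: (boolP (j \in H)) => jH.
    have ji : j != i by apply/eqP => eji; move: jM; rewrite eji (negbTE ni).
    by rewrite Hmsg //; apply: Hk.
  have : exists k, [/\ k \in H, k \notin M t i & k != i].
    case/boolP: [exists k, [&& k \in H, k \notin M t i & k != i]].
      by move=> /existsP [k /and3P [? ? ?]]; exists k.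
    move=> /existsPn Hn; exfalso.
    have sub : (j |: ~: (i |: M t i)) \subset ~: H.
      apply/fintype.subsetP => k; rewrite !inE => /orP [/eqP -> //|/norP [kni kM']].
      by move: (Hn k); rewrite kM' kni !andbT.
    have c1 := finset.cardsU1 j (~: (i |: M t i)).
    have c2 := finset.cardsC (i |: M t i).
    have c3 := finset.cardsU1 i (M t i).
    have jn : j \notin ~: (i |: M t i) by rewrite !inE jM orbT.
    have := subset_leq_card sub.
    rewrite c1 jn /=.
    move: c2 c3; rewrite ni card_ord cM /=.
    move: HB fn => h1 h2 h3 h4 h5. rewrite h4 in h3. have e : #|~: (i |: M t i)| = f by apply/eqP; rewrite -(eqn_add2l (1 + (n - f - 1))) h3; apply/eqP; lia. rewrite e in h5. have h6 := leq_trans h5 h1. by rewrite ltnn in h6.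
  move=> [k [kH kM ki]].
  have := Hle j k jM kM ki; rewrite /= (Hmsg t i k) // => /le_sq.
  rewrite sq_sym => h; apply: le_trans h _; rewrite sq_sym; exact: Hk.
have perI : forall i, i \in H ->
    enorm (\sum_(j in M t i) (msg t j i - x t i)) ^+ 2
    <= #|H|%:R * (#|H|%:R * (4 * V)).
  move=> i iH; rewrite enorm_sq; apply: le_trans (sq_sum _ _) _.
  have [ni cM Hle] := Htr t i iH.
  have cMH : (#|M t i| <= #|H|)%N.
    by rewrite cM; move: (cardsC H) HB; rewrite card_ord; lia.
  have cMHR : #|M t i|%:R <= #|H|%:R :> R by rewrite ler_nat.
  have S1 : \sum_(j in M t i) sq (msg t j i - x t i) <= #|M t i|%:R * (4 * V).
    apply: le_trans (ler_sum _ (key i iH)) _.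
    by rewrite sumr_const [X in _ <= X]mulrC mulr_natr.
  have N0 : 0 <= #|M t i|%:R :> R by exact: ler0n.
  have V4 : 0 <= 4 * V by lra.
  apply: le_trans (ler_wpM2l N0 S1) _.
  apply: ler_pM => //; first exact: mulr_ge0.
  exact: ler_wpM2r.
apply: le_trans (ler_sum _ perI) _.
rewrite sumr_const -mulr_natl.
have -> : (#|H| ^ 3)%:R = #|H|%:R * (#|H|%:R * #|H|%:R) :> R.
  by rewrite !natrX; ring.
rewrite -/V; lra.
Qed.

(* H = normal agents; Byzantine agents are ~: H.
   x t i = x_i(t); msg t j i = x_{ji}(t) (sent by j, received by i);
   M t i = M_i(t). *)
Theorem lemma4 (R : realType) (n m f : nat) (H : {set 'I_n})
  (X : 'I_n -> set 'rV[R]_m) (alpha : R) (xstar : 'rV[R]_m)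
  (x : nat -> 'I_n -> 'rV[R]_m) (msg : nat -> 'I_n -> 'I_n -> 'rV[R]_m)
  (M : nat -> 'I_n -> {set 'I_n}) :
  (f < n)%N ->
  (#|~: H| <= f)%N ->
  (forall i, i \in H -> closed (X i) /\ convex_rV (X i)) ->
  0 < alpha ->
  [set y | forall i, i \in H -> X i y] = [set xstar] ->
  (forall t i j, i \in H -> j \in H -> j != i -> msg t j i = x t j) ->
  (forall t i, i \in H -> trimmed f i (x t i) (fun j => msg t j i) (M t i)) ->
  (forall t i, i \in H ->
     is_proj (X i) (x t i + alpha *: \sum_(j in M t i) (msg t j i - x t i))
       (x t.+1 i)) ->
  forall t,
    \sum_(i in H) enorm (\sum_(j in M t i) (msg t j i - x t i)) ^+ 2
    <= 4 * (#|H| ^ 3)%:R * \sum_(i in H) enorm (x t i - xstar) ^+ 2.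
Proof.
move=> fn HB _ _ _ Hmsg Htr _.
exact: (@lemma4_proof R n m f H X alpha xstar x msg M fn HB Hmsg Htr).
Qed.
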